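(* Let $H$ be a hypergroup with hyperoperation $*$ and let $\equiv$ be a congruence relation on $H$. Let $H/\equiv=\{[a]:a\in H\}$ be the set of equivalence classes, with hyperoperation $[x]\boxdot[y]=\{[z]: z\in x'*y' \text{ for some } x',y'\in H \text{ with } [x']=[x],[y']=[y]\}$. Then $(H/\equiv,\boxdot)$ is a hypergroup.
   Context: A hypergroup is a nonempty set $H$ with $*:H\times H\to P^*(H)$ (nonempty subsets), extended to subsets by unions, which is associative, has a unique identity $e$ ($e*x=x*e=\{x\}$), unique inverses $h^{-1}$ with $e\in(h^{-1}*h)\cap(h*h^{-1})$, and is reversible ($c\in a*b\Rightarrow a\in c*b^{-1},\ b\in a^{-1}*c$). For an equivalence relation $\equiv$ on $H$ and subsets $A,B\subseteq H$, write $A\equiv B$ if for every $a\in A$ and $b\in B$ there exist $b'\in A$ and $a'\in B$ with $a\equiv a'$ and $b\equiv b'$. A congruence relation on $H$ is an equivalence relation $\equiv$ such that (i) if $a\equiv x$ and $b\equiv y$ then $a*b\equiv x*y$ and $b*a\equiv y*x$; (ii) if $a\equiv b$ then $a^{-1}\equiv b^{-1}$. *)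

(* Defs.v *)
(* A hyperoperation on a type T is a ternary relation
   [op x y z] meaning  z ∈ x * y. *)
From Stdlib Require Import RelationClasses.

Set Implicit Arguments.

Section Hyper.
Variable T : Type.
Variable op : T -> T -> T -> Prop.

Definition setop (A B : T -> Prop) : T -> Prop :=
  fun z => exists a b, A a /\ B b /\ op a b z.

Definition single (x : T) : T -> Prop := fun y => y = x.

Definition is_identity (e : T) : Prop :=
  forall x z, (op e x z <-> z = x) /\ (op x e z <-> z = x).

Definition is_inverse (e h h' : T) : Prop := op h' h e /\ op h h' e.

Definition is_hypergroup : Prop :=
  inhabited T /\
  (* values are nonempty subsets *)
  (forall x y, exists z, op x y z) /\
  (forall a b c z,
      setop (setop (single a) (single b)) (single c) z <->
      setop (single a) (setop (single b) (single c)) z) /\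
  exists e, is_identity e /\ (forall e', is_identity e' -> e' = e) /\
    (forall h, exists h', is_inverse e h h' /\
                 forall h'', is_inverse e h h'' -> h'' = h') /\
    (forall a b c a' b', op a b c -> is_inverse e a a' -> is_inverse e b b' ->
        op c b' a /\ op a' c b).

Definition set_equiv (R : T -> T -> Prop) (A B : T -> Prop) : Prop :=
  forall a b, A a -> B b ->
    exists b' a', A b' /\ B a' /\ R a a' /\ R b b'.

Definition is_congruence (R : T -> T -> Prop) : Prop :=
  Equivalence R /\
  (forall a b x y, R a x -> R b y ->
     set_equiv R (op a b) (op x y) /\ set_equiv R (op b a) (op y x)) /\
  (forall e a b a' b', is_identity e -> R a b ->
     is_inverse e a a' -> is_inverse e b b' -> R a' b').

End Hyper.

Definition quot (T : Type) (R : T -> T -> Prop) : Type :=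
  { C : T -> Prop | exists a, C = R a }.

Definition quot_op (T : Type) (op : T -> T -> T -> Prop) (R : T -> T -> Prop)
  (X Y Z : quot R) : Prop :=
  exists x' y' z, proj1_sig X x' /\ proj1_sig Y y' /\ op x' y' z /\
                  proj1_sig Z = R z.

(* Main.v *)
Require Import Defs.
From Stdlib Require Import RelationClasses ProofIrrelevance FunctionalExtensionality PropExtensionality.

Definition cls {T : Type} (R : T -> T -> Prop) (a : T) : quot R :=
  exist _ (R a) (ex_intro _ a eq_refl).

Lemma cls_eq {T} (R : T -> T -> Prop) a b : Equivalence R -> R a b -> cls R a = cls R b.
Proof.
  intros HE Hab. unfold cls.
  assert (E : R a = R b).
  { apply functional_extensionality; intro x; apply propositional_extensionality.
    split; intro H. - symmetry in Hab. now transitivity a.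
    - now transitivity b. }
  apply eq_sig_hprop; [intros; apply proof_irrelevance|exact E].
Qed.

Lemma cls_surj {T} (R : T -> T -> Prop) (X : quot R) : exists a, X = cls R a.
Proof.
  destruct X as [C [a Ha]]. exists a. subst C. reflexivity.
Qed.

Lemma fun_eq_R {T} (R : T -> T -> Prop) a b : Equivalence R -> R a = R b -> R a b.
Proof. intros HE H. rewrite H. reflexivity. Qed.

Lemma cls_inv {T} (R : T -> T -> Prop) a b : Equivalence R -> cls R a = cls R b -> R a b.
Proof. intros HE H. apply fun_eq_R; auto. exact (f_equal (@proj1_sig _ _) H). Qed.

Lemma qop_cls {T} (op : T -> T -> T -> Prop) (R : T -> T -> Prop) a b c :
  @quot_op T op R (cls R a) (cls R b) (cls R c) <->
  exists x y z, R a x /\ R b y /\ op x y z /\ R c = R z.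
Proof. reflexivity. Qed.

Theorem proposition4p13 (T : Type) (op : T -> T -> T -> Prop)
  (R : T -> T -> Prop) :
  is_hypergroup op -> is_congruence op R ->
  is_hypergroup (@quot_op T op R).
Proof.
  intros [[t0] [Hne [Has [e [Hid [Hidu [Hinv Hrev]]]]]]] [HE [Hc Hci]].
  assert (Rcls : forall a z, R a z -> R a = R z).
  { intros a z H. exact (f_equal (@proj1_sig _ _) (cls_eq R a z HE H)). }
  assert (SE : forall a b x y w, R a x -> R b y -> op x y w -> exists w', op a b w' /\ R w w').
  { intros a b x y w H1 H2 H3. destruct (Hne a b) as [u Hu].
    destruct (proj1 (Hc a b x y H1 H2) u w Hu H3) as [b' [a' [? [? [? ?]]]]].
    eauto. }
  assert (Inv : forall h h' X, is_inverse op e h h' -> @quot_op T op R X (cls R h) (cls R e) -> X = cls R h').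
  { intros h h' X Hhh' HX. destruct (cls_surj R X) as [k ->].
    destruct HX as [k1 [h1 [z [Hk [Hh [Hop Hz]]]]]]. simpl in *.
    destruct (Hinv h1) as [h1' [Hh1' _]].
    destruct (Hinv k1) as [k1' [Hk1' _]].
    assert (Hz' : R e z) by (apply fun_eq_R; auto).
    destruct (Hrev k1 h1 z k1' h1' Hop Hk1' Hh1') as [Hr _].
    assert (Hhh : R h' h1').
    { apply (Hci e h h1 h' h1'); auto; apply Hid. }
    destruct (SE e h' z h1' k1 Hz' Hhh Hr) as [w [Hw Hkw]].
    apply (proj1 (proj1 (Hid h' w))) in Hw. subst w.
    apply cls_eq; auto. now transitivity k1. }
  assert (RR : forall x, R x x) by (intro; reflexivity).
  assert (Qid : is_identity (@quot_op T op R) (cls R e)).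
  { intros X Z. destruct (cls_surj R X) as [x ->]. destruct (cls_surj R Z) as [z ->].
    split; split.
    - intros [e' [x' [z' [He [Hx [Hop Hz]]]]]]. simpl in *.
      destruct (SE e x' e' x' z' He (RR x') Hop) as [w [Hw Hzw]].
      apply (proj1 (proj1 (Hid x' w))) in Hw. subst w.
      apply cls_eq; auto. apply fun_eq_R in Hz; auto.
      transitivity z'; auto. transitivity x'; auto. symmetry; auto.
    - intro Heq. rewrite Heq. exists e, x, x. simpl. repeat split; auto.
      apply (proj2 (proj1 (Hid x x))); reflexivity.
    - intros [x' [e' [z' [Hx [He [Hop Hz]]]]]]. simpl in *.
      destruct (SE x' e x' e' z' (RR x') He Hop) as [w [Hw Hzw]].
      apply (proj1 (proj2 (Hid x' w))) in Hw. subst w.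
      apply cls_eq; auto. apply fun_eq_R in Hz; auto.
      transitivity z'; auto. transitivity x'; auto. symmetry; auto.
    - intro Heq. rewrite Heq. exists x, e, x. simpl. repeat split; auto.
      apply (proj2 (proj2 (Hid x x))); reflexivity. }
  split; [constructor; exact (cls R t0)|].
  split.
  { intros X Y. destruct (cls_surj R X) as [x ->]. destruct (cls_surj R Y) as [y ->].
    destruct (Hne x y) as [z Hz]. exists (cls R z), x, y, z. simpl. auto. }
  split.
  { intros A B C W.
    destruct (cls_surj R A) as [a ->]. destruct (cls_surj R B) as [b ->].
    destruct (cls_surj R C) as [c ->]. destruct (cls_surj R W) as [w0 ->].
    unfold setop, single. split.
    - intros [P [Q [[a1 [b1 [-> [-> HP]]]] [-> HQ]]]].
      destruct (cls_surj R P) as [u ->].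
      destruct HP as [x' [y' [u0 [Hx [Hy [Hop Hu]]]]]].
      destruct HQ as [u' [z' [w [Hu' [Hz [Hop2 Hw]]]]]]. simpl in *.
      apply fun_eq_R in Hu; auto. apply fun_eq_R in Hw; auto.
      assert (Hu0 : R u0 u') by (transitivity u; auto; symmetry; auto).
      destruct (SE u0 z' u' z' w Hu0 (RR z') Hop2) as [w' [Hw' Hww']].
      destruct (proj1 (Has x' y' z' w')) as [a2 [v [Ha2 [[b2 [c2 [Hb2 [Hc2 Hv]]]] Hop3]]]].
      { exists u0, z'. repeat split; auto. exists x', y'. repeat split; auto. }
      unfold single in *. subst a2 b2 c2.
      exists (cls R a), (cls R v). split; [reflexivity|split].
      + exists (cls R b), (cls R c). repeat split. exists y', z', v. simpl. auto.
      + exists x', v, w'. simpl. repeat split; auto. apply Rcls. transitivity w; auto.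
    - intros [P [Q [-> [[b1 [c1 [-> [-> HQ]]]] HP]]]].
      destruct (cls_surj R Q) as [v ->].
      destruct HQ as [y' [z' [v0 [Hy [Hz [Hop Hv]]]]]].
      destruct HP as [x' [v' [w [Hx [Hv' [Hop2 Hw]]]]]]. simpl in *.
      apply fun_eq_R in Hv; auto. apply fun_eq_R in Hw; auto.
      assert (Hv0 : R v0 v') by (transitivity v; auto; symmetry; auto).
      destruct (SE x' v0 x' v' w (RR x') Hv0 Hop2) as [w' [Hw' Hww']].
      destruct (proj2 (Has x' y' z' w')) as [u [c2 [[a2 [b2 [Ha2 [Hb2 Hu]]]] [Hc2 Hop3]]]].
      { exists x', v0. repeat split; auto. exists y', z'. repeat split; auto. }
      unfold single in *. subst a2 b2 c2.
      exists (cls R u), (cls R c). split; [|split; [reflexivity|]].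
      + exists (cls R a), (cls R b). repeat split. exists x', y', u. simpl. auto.
      + exists u, z', w'. simpl. repeat split; auto. apply Rcls. transitivity w; auto. }
  exists (cls R e). split; [exact Qid|].
  split.
  { intros E' HE'. apply (proj1 (proj1 (HE' (cls R e) E'))).
    apply (proj2 (proj2 (Qid E' E'))). reflexivity. }
  split.
  { intros X. destruct (cls_surj R X) as [h ->].
    destruct (Hinv h) as [h' [Hhh' _]]. exists (cls R h'). split.
    - split.
      + exists h', h, e. simpl. repeat split; auto. apply Hhh'.
      + exists h, h', e. simpl. repeat split; auto. apply Hhh'.
    - intros X'' [H1 H2]. apply (Inv h); auto. }
  intros A B C A' B' HABC HA HB.
  destruct (cls_surj R A) as [a ->]. destruct (cls_surj R B) as [b ->].
  destruct (cls_surj R C) as [c ->].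
  destruct HABC as [a1 [b1 [c1 [Ha [Hb [Hop Hc']]]]]]. simpl in *.
  destruct (Hinv a1) as [a1' [Ha1' _]]. destruct (Hinv b1) as [b1' [Hb1' _]].
  assert (EA : A' = cls R a1').
  { apply (Inv a1 a1' A' Ha1'). rewrite <- (cls_eq R a a1 HE Ha). apply HA. }
  assert (EB : B' = cls R b1').
  { apply (Inv b1 b1' B' Hb1'). rewrite <- (cls_eq R b b1 HE Hb). apply HB. }
  subst A' B'.
  destruct (Hrev a1 b1 c1 a1' b1' Hop Ha1' Hb1') as [H1 H2].
  apply fun_eq_R in Hc'; auto.
  split.
  - exists c1, b1', a1. simpl. repeat split; auto.
  - exists a1', c1, b1. simpl. repeat split; auto.
Qed.
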